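(* Let $\mathcal{S}$ be a sound saturation system and let $\mathcal{C}$ be one of the clause sets $\mathcal{X}_m$ or $\mathcal{Y}_{m,n}$ with natural numbers $0<n<m$. Then $\mathcal{S}+\mathrm{IND}^R_{\mathrm{PF}}(\mathrm{Open}(L(\mathcal{C})))$ does not refute $\mathcal{C}$.
   Context: Language of linear arithmetic $\{0/0,s/1,p/1,+/2\}$. $\mathcal{T}$ has axioms (universally closed) $0\neq s(x)$, $p(0)=0$, $p(s(x))=x$, $x+0=x$, $x+s(y)=s(x+y)$; $\mathcal{T}'$ is $\mathcal{T}$ plus $x\neq0\to x=s(p(x))$, $x+y=y+x$, $(x+y)+z=x+(y+z)$, $x+y=x+z\to y=z$. For $m\in\mathbb{N}$ and a term $t$, $m\cdot t$ is $t+(t+\cdots+(t+t)\cdots)$ ($m$ copies) and $s^n$ is $n$-fold $s$. $C_m=\forall x,y(m\cdot x=m\cdot y\to x=y)$, $D_{m,n}=\forall x,y\,(s^n(m\cdot x)\neq m\cdot y)$. $\mathcal{X}_m=\mathit{CNF}(\mathit{sk}^\exists(\mathcal{T}'+\neg C_m))$, $\mathcal{Y}_{m,n}=\mathit{CNF}(\mathit{sk}^\exists(\mathcal{T}'+\neg D_{m,n}))$, where $\mathit{sk}^\exists$ is existential Skolemization with canonical Skolem symbols (a strong quantifier $QxA$ with free variables $\vec y$ is replaced by $\mathfrak{s}_{QxA}(\vec y)$, a new function symbol indexed by $QxA$; here only new constants arise) and $\mathit{CNF}$ gives clause sets of conjunctive normal forms. $L(\mathcal{C})$ = symbols occurring in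 $\mathcal{C}$; $\mathrm{Open}(L)$ = quantifier-free $L$ formulas. $I_x\varphi=\forall\vec z(\varphi(0,\vec z)\wedge\forall x(\varphi(x,\vec z)\to\varphi(s(x),\vec z))\to\forall x\varphi(x,\vec z))$. Saturation systems: sets of rules $\mathcal{C}/\mathcal{D}$ ($\mathcal{C}$ clause set, $\mathcal{D}$ finite clause set), $+$ = union; a deduction from $\mathcal{C}_0$ is $\mathcal{D}_0=\mathcal{C}_0,\dots,\mathcal{D}_k$ with $\mathcal{D}_{i+1}=\mathcal{D}_i\cup\mathcal{B}_i$ for a rule $\mathcal{D}_i/\mathcal{B}_i$; a refutation has the empty clause in $\mathcal{D}_k$. Sound: any clause $C$ derivable from $\mathcal{C}_0$ has $L(C)\subseteq L(\mathcal{C}_0)$ and $\mathcal{C}_0\models C$. $\mathrm{IND}^R_{\mathrm{PF}}(\Gamma)$ is the set of rules $\mathcal{C}'/\mathit{CNF}(\mathit{sk}^\exists(I_x\varphi(x,\vec t)))$ for every clause set $\mathcal{C}'$, every $\varphi(x,\vec z)\in\Gamma$ and every vector $\vec t$ of ground $L(\mathcal{C}')$ terms. *)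

(* Defs.v *)
From Stdlib Require Import List Arith PeanoNat.
Import ListNotations.

(** Function symbols: 0, s, p, + and canonical Skolem symbols
    [Sk A] indexed by the (strong) quantified formula [A] = QxB they replace. *)
Inductive sym : Type :=
  | SZero | SSucc | SPred | SPlus
  | Sk (A : form)
with term : Type :=
  | Var (n : nat)
  | App (f : sym) (args : list term)
with form : Type :=
  | Eq (t u : term)
  | Neg (A : form)
  | And (A B : form)
  | Or (A B : form)
  | Imp (A B : form)
  | All (x : nat) (A : form)
  | Ex (x : nat) (A : form).

Definition zero : term := App SZero [].
Definition succ (t : term) : term := App SSucc [t].
Definition pred (t : term) : term := App SPred [t].
Definition plus (t u : term) : term := App SPlus [t; u].

Fixpoint tvars (t : term) : list nat :=
  match t with
  | Var n => [n]
  | App _ args => (fix go (l : list term) := match l with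
                     | [] => [] | a :: l' => tvars a ++ go l' end) args
  end.

(** symbols occurring in a term (the index of a Skolem symbol is not looked into) *)
Fixpoint tsyms (t : term) : list sym :=
  match t with
  | Var _ => []
  | App f args => f :: (fix go (l : list term) := match l with
                     | [] => [] | a :: l' => tsyms a ++ go l' end) args
  end.

Fixpoint tsubst (s : nat -> term) (t : term) : term :=
  match t with
  | Var n => s n
  | App f args => App f (map (tsubst s) args)
  end.

Definition upd (s : nat -> term) (x : nat) (t : term) : nat -> term :=
  fun y => if Nat.eqb y x then t else s y.

Fixpoint fsubst (s : nat -> term) (A : form) : form :=
  match A with
  | Eq t u => Eq (tsubst s t) (tsubst s u)
  | Neg B => Neg (fsubst s B)
  | And B C => And (fsubst s B) (fsubst s C)
  | Or B C => Or (fsubst s B) (fsubst s C)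
  | Imp B C => Imp (fsubst s B) (fsubst s C)
  | All x B => All x (fsubst (upd s x (Var x)) B)
  | Ex x B => Ex x (fsubst (upd s x (Var x)) B)
  end.

Fixpoint fv_raw (A : form) : list nat :=
  match A with
  | Eq t u => tvars t ++ tvars u
  | Neg B => fv_raw B
  | And B C | Or B C | Imp B C => fv_raw B ++ fv_raw C
  | All x B | Ex x B => filter (fun y => negb (Nat.eqb y x)) (fv_raw B)
  end.

Fixpoint undup (l : list nat) : list nat :=
  match l with
  | [] => []
  | a :: l' => if existsb (Nat.eqb a) l' then undup l' else a :: undup l'
  end.

Definition fv (A : form) : list nat := undup (fv_raw A).

Fixpoint allvars (A : form) : list nat :=
  match A with
  | Eq t u => tvars t ++ tvars u
  | Neg B => allvars B
  | And B C | Or B C | Imp B C => allvars B ++ allvars C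
  | All x B | Ex x B => x :: allvars B
  end.

Definition maxvar (A : form) : nat := fold_right Nat.max 0 (allvars A).

Fixpoint fsyms (A : form) : list sym :=
  match A with
  | Eq t u => tsyms t ++ tsyms u
  | Neg B => fsyms B
  | And B C | Or B C | Imp B C => fsyms B ++ fsyms C
  | All _ B | Ex _ B => fsyms B
  end.

Definition arity (f : sym) : nat :=
  match f with
  | SZero => 0 | SSucc => 1 | SPred => 1 | SPlus => 2
  | Sk A => length (fv A)
  end.

Fixpoint wf_term (t : term) : Prop :=
  match t with
  | Var _ => True
  | App f args => length args = arity f /\
      (fix go (l : list term) := match l with
         | [] => True | a :: l' => wf_term a /\ go l' end) args
  end.

Fixpoint wf_form (A : form) : Prop :=
  match A with
  | Eq t u => wf_term t /\ wf_term u
  | Neg B => wf_form B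
  | And B C | Or B C | Imp B C => wf_form B /\ wf_form C
  | All _ B | Ex _ B => wf_form B
  end.

Fixpoint quantifier_free (A : form) : Prop :=
  match A with
  | Eq _ _ => True
  | Neg B => quantifier_free B
  | And B C | Or B C | Imp B C => quantifier_free B /\ quantifier_free C
  | All _ _ | Ex _ _ => False
  end.

(** * Existential Skolemization [sk^∃] (for formulas asserted as axioms,
    i.e. satisfiability-preserving).  [sk pos env k A] processes [A] occurring
    with polarity [pos]; [env] is the current substitution for variables bound
    by outer quantifiers, [k] the next fresh variable.  Strong quantifiers
    (∃ positive, ∀ negative) QxB are replaced by [Sk QxB'(ys)] where QxB' is the
    current instance of the subformula and ys its free variables; weak ones
    are replaced by fresh variables (universally read in the clauses). *)
Fixpoint sk (pos : bool) (env : nat -> term) (k : nat) (A : form) : form * nat :=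
  match A with
  | Eq t u => let e := Eq (tsubst env t) (tsubst env u) in
              (if pos then e else Neg e, k)
  | Neg B => sk (negb pos) env k B
  | And B C => let (b, k1) := sk pos env k B in
               let (c, k2) := sk pos env k1 C in
               (if pos then And b c else Or b c, k2)
  | Or B C => let (b, k1) := sk pos env k B in
              let (c, k2) := sk pos env k1 C in
              (if pos then Or b c else And b c, k2)
  | Imp B C => let (b, k1) := sk (negb pos) env k B in
               let (c, k2) := sk pos env k1 C in
               (if pos then Or b c else And b c, k2)
  | All x B =>
      if pos then sk pos (upd env x (Var k)) (S k) B
      else let idx := fsubst env (All x B) in
           sk pos (upd env x (App (Sk idx) (map Var (fv idx)))) k B
  | Ex x B =>
      if pos then
        let idx := fsubst env (Ex x B) in
        sk pos (upd env x (App (Sk idx) (map Var (fv idx)))) k B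
      else sk pos (upd env x (Var k)) (S k) B
  end.

Inductive literal : Type := Lit (positive : bool) (t u : term).
Definition clause := list literal.
Definition clause_set := clause -> Prop.

(** CNF of a quantifier-free NNF formula (the output of [sk]) by
    distribution; other shapes never occur. *)
Fixpoint cnf (A : form) : list clause :=
  match A with
  | Eq t u => [[Lit true t u]]
  | Neg (Eq t u) => [[Lit false t u]]
  | And B C => cnf B ++ cnf C
  | Or B C => flat_map (fun c1 => map (fun c2 => c1 ++ c2) (cnf C)) (cnf B)
  | _ => []
  end.

Definition cnf_sk (A : form) : list clause :=
  cnf (fst (sk true Var (S (maxvar A)) A)).

Definition cnf_sk_theory (G : list form) : clause_set :=
  fun c => In c (flat_map cnf_sk G).

Definition lsyms (l : literal) : list sym :=
  match l with Lit _ t u => tsyms t ++ tsyms u end.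
Definition csyms (c : clause) : list sym := flat_map lsyms c.

Definition inL (C : clause_set) (f : sym) : Prop :=
  exists c, C c /\ In f (csyms c).

(** * Semantics: structures interpret every symbol (as a function on lists of
    arguments; for well-formed terms only the arity-many case matters);
    clauses are read universally closed. *)
Fixpoint teval {D : Type} (I : sym -> list D -> D) (rho : nat -> D) (t : term) : D :=
  match t with
  | Var n => rho n
  | App f args => I f (map (teval I rho) args)
  end.

Definition lit_sat {D : Type} (I : sym -> list D -> D) (rho : nat -> D) (l : literal) : Prop :=
  match l with
  | Lit true t u => teval I rho t = teval I rho u
  | Lit false t u => teval I rho t <> teval I rho u
  end.

Definition clause_sat {D : Type} (I : sym -> list D -> D) (c : clause) : Prop :=
  forall rho : nat -> D, exists l, In l c /\ lit_sat I rho l.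

Definition entails (C0 : clause_set) (c : clause) : Prop :=
  forall (D : Type) (I : sym -> list D -> D),
    (forall c0, C0 c0 -> clause_sat I c0) -> clause_sat I c.

(** * Saturation systems: sets of rules C/D (C clause set, D finite clause set) *)
Definition sat_system := clause_set -> list clause -> Prop.

Definition set_eq (A B : clause_set) : Prop := forall c, A c <-> B c.

Definition sys_union (S1 S2 : sat_system) : sat_system :=
  fun P B => S1 P B \/ S2 P B.

Definition step (S : sat_system) (Di Dj : clause_set) : Prop :=
  exists P B, S P B /\ set_eq P Di /\ set_eq Dj (fun c => Di c \/ In c B).

Definition deduction (S : sat_system) (C0 : clause_set)
  (Ds : nat -> clause_set) (k : nat) : Prop :=
  set_eq (Ds 0) C0 /\ forall i, i < k -> step S (Ds i) (Ds (Datatypes.S i)).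

Definition derivable (S : sat_system) (C0 : clause_set) (c : clause) : Prop :=
  exists Ds k, deduction S C0 Ds k /\ Ds k c.

Definition refutes (S : sat_system) (C0 : clause_set) : Prop :=
  derivable S C0 [].

Definition sound (S : sat_system) : Prop :=
  forall C0 c, derivable S C0 c ->
    (forall f, In f (csyms c) -> inL C0 f) /\ entails C0 c.

Definition Open (C : clause_set) : form -> Prop :=
  fun A => quantifier_free A /\ wf_form A /\ (forall f, In f (fsyms A) -> inL C f).

Definition ground_L_term (C : clause_set) (t : term) : Prop :=
  wf_term t /\ tvars t = [] /\ (forall f, In f (tsyms t) -> inL C f).

(** I_x A for A with only x free (the vector z already instantiated) *)
Definition Ind (x : nat) (A : form) : form :=
  Imp (And (fsubst (upd Var x zero) A)
           (All x (Imp A (fsubst (upd Var x (succ (Var x))) A))))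
      (All x A).

(** rule C'/CNF(sk^∃(I_x φ(x, t))) for φ(x, z) ∈ Γ, t ground L(C') terms
    (ts y is the ground term substituted for the parameter y ≠ x of φ) *)
Definition IND (G : form -> Prop) : sat_system :=
  fun P B => exists (phi : form) (x : nat) (ts : nat -> term),
    G phi /\
    (forall y, In y (fv phi) -> y <> x -> ground_L_term P (ts y)) /\
    B = cnf_sk (Ind x (fsubst (fun y => if Nat.eqb y x then Var x else ts y) phi)).

Definition vx := Var 0.
Definition vy := Var 1.
Definition vz := Var 2.

(** m·t = t+(t+⋯+(t+t)⋯) (m copies; only used for m ≥ 1) *)
Fixpoint mult (m : nat) (t : term) : term :=
  match m with
  | 0 => zero
  | Datatypes.S m' => match m' with 0 => t | _ => plus t (mult m' t) end
  end.

Fixpoint sN (n : nat) (t : term) : term :=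
  match n with 0 => t | Datatypes.S n' => succ (sN n' t) end.

Definition neq (t u : term) : form := Neg (Eq t u).

Definition theory_T : list form :=
  [ All 0 (neq zero (succ vx));
    Eq (pred zero) zero;
    All 0 (Eq (pred (succ vx)) vx);
    All 0 (Eq (plus vx zero) vx);
    All 0 (All 1 (Eq (plus vx (succ vy)) (succ (plus vx vy)))) ].

Definition theory_T' : list form :=
  theory_T ++
  [ All 0 (Imp (neq vx zero) (Eq vx (succ (pred vx))));
    All 0 (All 1 (Eq (plus vx vy) (plus vy vx)));
    All 0 (All 1 (All 2 (Eq (plus (plus vx vy) vz) (plus vx (plus vy vz)))));
    All 0 (All 1 (All 2 (Imp (Eq (plus vx vy) (plus vx vz)) (Eq vy vz)))) ].

Definition C_ (m : nat) : form :=
  All 0 (All 1 (Imp (Eq (mult m vx) (mult m vy)) (Eq vx vy))).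

Definition D_ (m n : nat) : form :=
  All 0 (All 1 (neq (sN n (mult m vx)) (mult m vy))).

Definition X_ (m : nat) : clause_set := cnf_sk_theory (theory_T' ++ [Neg (C_ m)]).
Definition Y_ (m n : nat) : clause_set := cnf_sk_theory (theory_T' ++ [Neg (D_ m n)]).

(* Main.v *)
Require Import Defs.
From Stdlib Require Import List Arith PeanoNat ZArith Lia Classical ClassicalEpsilon FunctionalExtensionality Eqdep_dec.
Import ListNotations.

Fixpoint term_ind' (P : term -> Prop) (HV : forall n, P (Var n))
  (HA : forall f args, Forall P args -> P (App f args)) (t : term) : P t :=
  match t with
  | Var n => HV n
  | App f args => HA f args
      ((fix go (l : list term) : Forall P l := match l with
        | [] => Forall_nil _
        | a :: l' => Forall_cons _ (term_ind' P HV HA a) (go l') end) args)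
  end.

Section Model.
Variable D : Type.
Variable d0 : D.
Variable base : sym -> list D -> D.

Definition dupd (rho : nat -> D) (x : nat) (d : D) : nat -> D :=
  fun y => if Nat.eqb y x then d else rho y.

Definition choose (P : D -> Prop) : D :=
  match excluded_middle_informative (exists d, P d) with
  | left h => proj1_sig (constructive_indefinite_description P h)
  | right _ => d0
  end.

Fixpoint Isym (f : sym) (args : list D) {struct f} : D :=
  match f with
  | Sk A => match A with
            | All x B => choose (fun d => ~ feval' (dupd (fun _ => d0) x d) B)
            | Ex x B => choose (fun d => feval' (dupd (fun _ => d0) x d) B)
            | _ => d0 end
  | _ => base f args
  end
with teval' (rho : nat -> D) (t : term) {struct t} : D :=
  match t with
  | Var n => rho n
  | App f args => Isym f (map (teval' rho) args)
  end
with feval' (rho : nat -> D) (A : form) {struct A} : Prop :=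
  match A with
  | Eq t u => teval' rho t = teval' rho u
  | Neg B => ~ feval' rho B
  | And B C => feval' rho B /\ feval' rho C
  | Or B C => feval' rho B \/ feval' rho C
  | Imp B C => feval' rho B -> feval' rho C
  | All x B => forall d, feval' (dupd rho x d) B
  | Ex x B => exists d, feval' (dupd rho x d) B
  end.

Lemma choose_spec (P : D -> Prop) : (exists d, P d) -> P (choose P).
Proof.
  intro h. unfold choose. destruct (excluded_middle_informative _) as [h'|h'].
  - exact (proj2_sig (constructive_indefinite_description P h')).
  - contradiction.
Qed.

Lemma teval_eq : forall rho t, teval' rho t = teval Isym rho t.
Proof.
  intros rho t. induction t as [n|f args IH] using term_ind'; simpl; auto.
  f_equal. induction IH; simpl; f_equal; auto.
Qed.

Lemma Isym_Sk A l : Isym (Sk A) l = Isym (Sk A) [].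
Proof. reflexivity. Qed.

Lemma teval_subst : forall rho s t,
  teval' rho (tsubst s t) = teval' (fun n => teval' rho (s n)) t.
Proof.
  intros rho s t. induction t as [n|f args IH] using term_ind'; simpl; auto.
  f_equal. rewrite map_map. induction IH; simpl; f_equal; auto.
Qed.

Lemma teval_ext : forall rho rho' t, (forall n, In n (tvars t) -> rho n = rho' n) ->
  teval' rho t = teval' rho' t.
Proof.
  intros rho rho' t. induction t as [n|f args IH] using term_ind'; simpl; intro H.
  - apply H; auto.
  - f_equal. induction IH; simpl; f_equal; auto.
    + apply H0. intros n Hn. apply H. simpl. apply in_or_app; auto.
    + apply IHIH. intros n Hn. apply H. simpl. apply in_or_app; auto.
Qed.

Lemma feval_ext : forall A rho rho', (forall n, rho n = rho' n) ->
  (feval' rho A <-> feval' rho' A).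
Proof.
  induction A; intros rho rho' H; simpl.
  - rewrite (teval_ext rho rho' t), (teval_ext rho rho' u); auto; tauto.
  - rewrite (IHA rho rho'); auto; tauto.
  - rewrite (IHA1 rho rho'), (IHA2 rho rho'); auto; tauto.
  - rewrite (IHA1 rho rho'), (IHA2 rho rho'); auto; tauto.
  - rewrite (IHA1 rho rho'), (IHA2 rho rho'); auto; tauto.
  - split; intros h d; [rewrite <- (IHA (dupd rho x d))|rewrite (IHA _ (dupd rho' x d))]; auto;
      intro n; unfold dupd; destruct (Nat.eqb n x); auto.
  - split; intros [d h]; exists d; [rewrite <- (IHA (dupd rho x d))|rewrite (IHA _ (dupd rho' x d))]; auto;
      intro n; unfold dupd; destruct (Nat.eqb n x); auto.
Qed.

Lemma fsubst_qf : forall A s, quantifier_free A -> quantifier_free (fsubst s A).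
Proof. induction A; simpl; intros; intuition. Qed.

Lemma feval_subst : forall A s rho, quantifier_free A ->
  (feval' rho (fsubst s A) <-> feval' (fun n => teval' rho (s n)) A).
Proof.
  induction A; simpl; intros s rho H; try contradiction.
  - rewrite !teval_subst; tauto.
  - rewrite IHA; tauto.
  - rewrite IHA1, IHA2; tauto.
  - rewrite IHA1, IHA2; tauto.
  - rewrite IHA1, IHA2; tauto.
Qed.

Lemma feval_dep : forall A rho rho', quantifier_free A ->
  (forall n, In n (fv_raw A) -> rho n = rho' n) -> (feval' rho A <-> feval' rho' A).
Proof.
  induction A; simpl; intros rho rho' Hq H; try contradiction.
  - rewrite (teval_ext rho rho' t), (teval_ext rho rho' u); try tauto;
      intros; apply H; apply in_or_app; auto.
  - rewrite (IHA rho rho'); auto; tauto.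
  - rewrite (IHA1 rho rho'), (IHA2 rho rho'); try tauto; intros; apply H; apply in_or_app; auto.
  - rewrite (IHA1 rho rho'), (IHA2 rho rho'); try tauto; intros; apply H; apply in_or_app; auto.
  - rewrite (IHA1 rho rho'), (IHA2 rho rho'); try tauto; intros; apply H; apply in_or_app; auto.
Qed.

Fixpoint nnf (F : form) : Prop :=
  match F with
  | Eq _ _ => True
  | Neg (Eq _ _) => True
  | And B C | Or B C => nnf B /\ nnf C
  | _ => False
  end.

Fixpoint wk (pos : bool) (A : form) : Prop :=
  match A with
  | Eq _ _ => True
  | Neg B => wk (negb pos) B
  | And B C | Or B C => wk pos B /\ wk pos C
  | Imp B C => wk (negb pos) B /\ wk pos C
  | All _ B => pos = true /\ wk pos B
  | Ex _ B => pos = false /\ wk pos B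
  end.

Lemma qf_wk : forall A pos, quantifier_free A -> wk pos A.
Proof. induction A; simpl; intros; intuition. Qed.

Lemma sk_nnf : forall A pos env k, wk pos A -> nnf (fst (sk pos env k A)).
Proof.
  induction A; intros pos env k H; simpl in *.
  - destruct pos; simpl; auto.
  - apply IHA; auto.
  - destruct H. specialize (IHA1 pos env k H).
    destruct (sk pos env k A1) as [b k1] eqn:E1.
    specialize (IHA2 pos env k1 H0).
    destruct (sk pos env k1 A2) as [c k2]. destruct pos; simpl in *; auto.
  - destruct H. specialize (IHA1 pos env k H).
    destruct (sk pos env k A1) as [b k1] eqn:E1.
    specialize (IHA2 pos env k1 H0).
    destruct (sk pos env k1 A2) as [c k2]. destruct pos; simpl in *; auto.
  - destruct H. specialize (IHA1 (negb pos) env k H).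
    destruct (sk (negb pos) env k A1) as [b k1] eqn:E1.
    specialize (IHA2 pos env k1 H0).
    destruct (sk pos env k1 A2) as [c k2]. destruct pos; simpl in *; auto.
  - destruct H as [-> H]. apply IHA; auto.
  - destruct H as [-> H]. apply IHA; auto.
Qed.

Lemma sk_sound : forall A pos env k rho, wk pos A ->
  (if pos then feval' (fun n => teval' rho (env n)) A
   else ~ feval' (fun n => teval' rho (env n)) A) ->
  feval' rho (fst (sk pos env k A)).
Proof.
  induction A; intros pos env k rho H T; simpl in *.
  - destruct pos; simpl; rewrite !teval_subst; auto.
  - apply IHA; auto. destruct pos; simpl; auto. apply NNPP; auto.
  - destruct H. pose proof (IHA1 pos env k rho H) as I1.
    destruct (sk pos env k A1) as [b k1] eqn:E1.
    pose proof (IHA2 pos env k1 rho H0) as I2.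
    destruct (sk pos env k1 A2) as [c k2]. destruct pos; simpl in *.
    + tauto.
    + apply not_and_or in T. tauto.
  - destruct H. pose proof (IHA1 pos env k rho H) as I1.
    destruct (sk pos env k A1) as [b k1] eqn:E1.
    pose proof (IHA2 pos env k1 rho H0) as I2.
    destruct (sk pos env k1 A2) as [c k2]. destruct pos; simpl in *; tauto.
  - destruct H. pose proof (IHA1 (negb pos) env k rho H) as I1.
    destruct (sk (negb pos) env k A1) as [b k1] eqn:E1.
    pose proof (IHA2 pos env k1 rho H0) as I2.
    destruct (sk pos env k1 A2) as [c k2]. destruct pos; simpl in *.
    + apply imply_to_or in T. tauto.
    + apply imply_to_and in T. tauto.
  - destruct H as [-> H]. apply IHA; auto.
    rewrite (feval_ext _ _ (dupd (fun n => teval' rho (env n)) x (rho k))). apply T.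
    intro n. unfold upd, dupd. destruct (Nat.eqb n x); reflexivity.
  - destruct H as [-> H]. apply IHA; auto. intro T'. apply T. exists (rho k).
    rewrite (feval_ext _ _ (fun n => teval' rho (upd env x (Var k) n))). apply T'.
    intro n. unfold upd, dupd. destruct (Nat.eqb n x); reflexivity.
Qed.

Definition lsat (rho : nat -> D) (l : literal) : Prop :=
  match l with
  | Lit true t u => teval' rho t = teval' rho u
  | Lit false t u => teval' rho t <> teval' rho u
  end.

Lemma cnf_sound : forall F rho, nnf F -> feval' rho F ->
  forall c, In c (cnf F) -> exists l, In l c /\ lsat rho l.
Proof.
  induction F; intros rho Hn Hf c Hc; simpl in *; try contradiction.
  - destruct Hc as [<-|[]]. exists (Lit true t u); simpl; auto.
  - destruct F; try contradiction. destruct Hc as [<-|[]]. exists (Lit false t u); simpl; auto.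
  - destruct Hn, Hf. apply in_app_or in Hc. destruct Hc; eauto.
  - destruct Hn. apply in_flat_map in Hc. destruct Hc as [c1 [H1 H2]].
    apply in_map_iff in H2. destruct H2 as [c2 [<- H3]].
    destruct Hf as [Hf|Hf].
    + destruct (IHF1 rho H Hf c1 H1) as [l [? ?]]. exists l. split; auto. apply in_or_app; auto.
    + destruct (IHF2 rho H0 Hf c2 H3) as [l [? ?]]. exists l. split; auto. apply in_or_app; auto.
Qed.

Lemma lsat_eq rho l : lsat rho l <-> lit_sat Isym rho l.
Proof. destruct l as [[] t u]; simpl; rewrite !teval_eq; tauto. Qed.

Lemma cnf_sat : forall F, nnf F -> (forall rho, feval' rho F) ->
  forall c, In c (cnf F) -> clause_sat Isym c.
Proof.
  intros F Hn Hf c Hc rho. destruct (cnf_sound F rho Hn (Hf rho) c Hc) as [l [? ?]].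
  exists l. split; auto. apply lsat_eq; auto.
Qed.
End Model.

Lemma undup_In : forall l a, In a (undup l) <-> In a l.
Proof.
  induction l as [|b l IH]; simpl; intro a; [tauto|].
  destruct (existsb (Nat.eqb b) l) eqn:E.
  - rewrite IH. split; [auto|]. intros [<-|h]; auto.
    apply existsb_exists in E. destruct E as [y [Hy Hb]]. apply Nat.eqb_eq in Hb. subst; auto.
  - simpl. rewrite IH. tauto.
Qed.

Lemma tsubst_Var : forall t s, (forall n, s n = Var n) -> tsubst s t = t.
Proof.
  intros t. induction t as [n|f args IH] using term_ind'; simpl; intros s H; auto.
  f_equal. induction IH; simpl; f_equal; auto.
Qed.

Lemma fsubst_Var : forall A s, (forall n, s n = Var n) -> fsubst s A = A.
Proof.
  induction A; simpl; intros s H; f_equal; auto using tsubst_Var;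
  apply IHA; intro n; unfold upd; destruct (Nat.eqb n x) eqn:E; auto;
  apply Nat.eqb_eq in E; subst; auto.
Qed.

Section Generic.
Variable D : Type.
Variable d0 : D.
Variable base : sym -> list D -> D.
Notation I := (Isym D d0 base).
Notation tv := (teval' D d0 base).
Notation fe := (feval' D d0 base).
Definition zD := base SZero [].
Definition sD d := base SSucc [d].

Hypothesis Hind : forall A x rho, quantifier_free A ->
  fe (dupd D rho x zD) A -> (forall d, fe (dupd D rho x d) A -> fe (dupd D rho x (sD d)) A) ->
  forall d, fe (dupd D rho x d) A.

Lemma ind_clauses : forall phi x ts, quantifier_free phi ->
  (forall y, In y (fv phi) -> y <> x -> tvars (ts y) = []) ->
  forall c, In c (cnf_sk (Ind x (fsubst (fun y => if Nat.eqb y x then Var x else ts y) phi))) ->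
  clause_sat I c.
Proof.
  intros phi x ts Hq Hg.
  set (A := fsubst _ phi).
  assert (HqA : quantifier_free A) by (apply fsubst_qf; auto).
  assert (Hx : forall rho rho', rho x = rho' x -> (fe rho A <-> fe rho' A)).
  { intros rho rho' E. unfold A. rewrite !feval_subst by auto.
    apply feval_dep; auto. intros n Hn.
    destruct (Nat.eqb n x) eqn:En.
    - simpl. apply Nat.eqb_eq in En. subst. auto.
    - apply teval_ext. rewrite Hg; [simpl; tauto| |].
      + apply undup_In; auto.
      + intro; subst; rewrite Nat.eqb_refl in En; discriminate. }
  set (Q := fun d => fe (dupd D (fun _ => d0) x d) A).
  assert (HQ : forall rho, fe rho A <-> Q (rho x)).
  { intro rho. apply Hx. unfold dupd. rewrite Nat.eqb_refl. auto. }
  set (A0 := fsubst (upd Var x zero) A).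
  set (As := fsubst (upd Var x (succ (Var x))) A).
  assert (HA0 : forall rho, fe rho A0 <-> Q zD).
  { intro rho. unfold A0. rewrite feval_subst by auto. rewrite HQ.
    unfold upd. rewrite Nat.eqb_refl. reflexivity. }
  assert (HAs : forall rho, fe rho As <-> Q (sD (rho x))).
  { intro rho. unfold As. rewrite feval_subst by auto. rewrite HQ.
    unfold upd. rewrite Nat.eqb_refl. reflexivity. }
  unfold cnf_sk, Ind. fold A0. fold As.
  cbn [sk negb].
  set (K := Datatypes.S _).
  destruct (sk false Var K A0) as [b0 k1] eqn:E0.
  set (idx := fsubst Var (All x (Imp A As))).
  set (env1 := upd Var x (App (Sk idx) (map Var (fv idx)))).
  destruct (sk true env1 k1 A) as [b1 k1'] eqn:E1.
  destruct (sk false env1 k1' As) as [c1 k2] eqn:E2.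
  simpl.
  pose proof (sk_nnf A0 false Var K (qf_wk _ _ (fsubst_qf _ _ HqA))) as N0. rewrite E0 in N0.
  pose proof (sk_nnf A true env1 k1 (qf_wk _ _ HqA)) as N1. rewrite E1 in N1.
  pose proof (sk_nnf As false env1 k1' (qf_wk _ _ (fsubst_qf _ _ HqA))) as N2. rewrite E2 in N2.
  pose proof (sk_nnf A true (upd Var x (Var k2)) (Datatypes.S k2) (qf_wk _ _ HqA)) as N3.
  pose proof (fun rho => sk_sound D d0 base A true (upd Var x (Var k2)) (Datatypes.S k2) rho (qf_wk _ _ HqA)) as S3.
  destruct (sk true (upd Var x (Var k2)) (Datatypes.S k2) A) as [c2 k3] eqn:E3.
  simpl in N0, N1, N2, N3.
  apply cnf_sat; [simpl; repeat split; auto|].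
  intro rho. simpl. specialize (S3 rho).
  pose proof (sk_sound D d0 base A0 false Var K rho (qf_wk _ _ (fsubst_qf _ _ HqA))) as S0.
  rewrite E0 in S0. simpl in S0.
  pose proof (sk_sound D d0 base A true env1 k1 rho (qf_wk _ _ HqA)) as S1.
  rewrite E1 in S1. simpl in S1.
  pose proof (sk_sound D d0 base As false env1 k1' rho (qf_wk _ _ (fsubst_qf _ _ HqA))) as S2.
  rewrite E2 in S2. simpl in S2.
  simpl in S3.
  rewrite HA0 in S0. rewrite HQ in S1, S3. rewrite HAs in S2.
  unfold env1, upd in S1, S2, S3. rewrite Nat.eqb_refl in S1, S2, S3. simpl in S1, S2, S3.
  assert (Hid : forall n, upd Var x (Var x) n = Var n).
  { intro n; unfold upd; destruct (Nat.eqb n x) eqn:E; auto; apply Nat.eqb_eq in E; subst; auto. }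
  rewrite (fsubst_Var A _ Hid), (fsubst_Var As _ Hid) in S1, S2.
  set (w := choose _ _ _) in *.
  assert (E : forall d, fe (dupd D (fun _ => d0) x d) As <-> Q (sD d)).
  { intro d. rewrite HAs. unfold dupd. rewrite Nat.eqb_refl. tauto. }
  assert (Hc : (exists d, Q d /\ ~ Q (sD d)) -> Q w /\ ~ Q (sD w)).
  { intro h. pose proof (choose_spec D d0 (fun d => ~ (fe (dupd D (fun _ => d0) x d) A ->
       fe (dupd D (fun _ => d0) x d) As))) as CS. fold w in CS.
    cbv beta in CS. rewrite E in CS. fold (Q w) in CS.
    assert (~ (Q w -> Q (sD w))); [|tauto]. apply CS.
    destruct h as [d [h1 h2]]. exists d. rewrite E. tauto. }
  destruct (classic (Q zD)) as [Hz|Hz]; [|left; left; apply S0; auto].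
  destruct (classic (Q (rho k2))) as [Hk|Hk]; [right; apply S3; auto|].
  left; right.
  assert (exists d, Q d /\ ~ Q (sD d)).
  { apply NNPP. intro hn. apply Hk.
    unfold Q. apply Hind; auto. intros d hd. apply NNPP. intro hd'. apply hn. exists d. auto. }
  destruct (Hc H). split; auto.
Qed.

Lemma no_refute : forall (C : clause_set), (forall c, C c -> clause_sat I c) ->
  forall SS : sat_system, sound SS -> ~ refutes (sys_union SS (IND (Open C))) C.
Proof.
  intros C HC SS Hs [Ds [k [[H0 Hst] Hk]]].
  assert (Hall : forall i, i <= k -> forall c, Ds i c -> clause_sat I c).
  { induction i as [|i IH]; intros Hi c Hc.
    - apply HC, H0, Hc.
    - destruct (Hst i Hi) as [P [B [HR [HP HD]]]].
      assert (HPs : forall c0, P c0 -> clause_sat I c0).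
      { intros c0 h. apply IH; [lia|]. apply HP; auto. }
      apply HD in Hc. destruct Hc as [Hc|Hc]; [apply IH; auto; lia|].
      destruct HR as [HR|HR].
      + assert (Hd : derivable SS P c).
        { exists (fun j => match j with 0 => P | _ => fun c => P c \/ In c B end), 1.
          split; [split|].
          - intro; tauto.
          - intros j Hj. assert (j = 0) by lia. subst. exists P, B. split; auto.
            split; intro; tauto.
          - simpl; auto. }
        apply (proj2 (Hs P c Hd) D I HPs).
      + destruct HR as [phi [x [ts [[Hq _] [Hts ->]]]]].
        apply (ind_clauses phi x ts Hq); auto.
        intros y Hy Hyx. apply (Hts y Hy Hyx). }
  destruct (Hall k (le_n k) [] Hk (fun _ => d0)) as [l [[] _]].
Qed.
End Generic.

Section Clauses.
Variable D : Type.
Variable d0 : D.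
Variable base : sym -> list D -> D.
Notation I := (Isym D d0 base).
Notation tv := (teval' D d0 base).
Notation fe := (feval' D d0 base).

Fixpoint mulD (k : nat) (d : D) : D :=
  match k with
  | 0 => zD D base
  | Datatypes.S k' => match k' with 0 => d | _ => base SPlus [d; mulD k' d] end
  end.

Lemma tv_mult : forall k rho t, tv rho (mult k t) = mulD k (tv rho t).
Proof.
  induction k as [|k IH]; intros rho t; [reflexivity|].
  destruct k; [reflexivity|]. specialize (IH rho t). simpl mult in *. simpl in *.
  rewrite IH. reflexivity.
Qed.

Lemma tv_sN : forall n rho t, tv rho (sN n t) = Nat.iter n (sD D base) (tv rho t).
Proof. induction n; intros; simpl; auto. rewrite <- IHn. reflexivity. Qed.

Hypothesis HT : forall A, In A theory_T' -> forall rho, fe rho A.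

Lemma T_sat : forall A c, In A theory_T' -> In c (cnf_sk A) -> clause_sat I c.
Proof.
  intros A c HA Hc. unfold cnf_sk in Hc.
  assert (Hw : wk true A).
  { simpl in HA. repeat (destruct HA as [<-|HA]; [simpl; tauto|]). destruct HA. }
  refine (cnf_sat D d0 base _ (sk_nnf _ _ _ _ Hw) _ c Hc).
  intro rho. apply sk_sound; auto.
Qed.

Lemma Hid0 : forall n, Var n = Var n. Proof. auto. Qed.

Lemma negC_sat m : (exists a b, mulD m a = mulD m b /\ a <> b) ->
  forall c, In c (cnf_sk (Neg (C_ m))) -> clause_sat I c.
Proof.
  intros Hab c Hc. unfold cnf_sk in Hc.
  set (K := Datatypes.S _) in Hc.
  set (E1 := Eq (mult m vx) (mult m vy)). set (E2 := Eq vx vy).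
  set (idx1 := fsubst Var (All 0 (All 1 (Imp E1 E2)))).
  set (at1 := App (Sk idx1) (map Var (fv idx1))).
  set (idx2 := fsubst (upd Var 0 at1) (All 1 (Imp E1 E2))).
  set (bt := App (Sk idx2) (map Var (fv idx2))).
  change (sk true Var K (Neg (C_ m))) with (sk false (upd (upd Var 0 at1) 1 bt) K (Imp E1 E2)) in Hc.
  assert (Hev : forall rho', (fe rho' (Imp E1 E2) <->
     (mulD m (rho' 0) = mulD m (rho' 1) -> rho' 0 = rho' 1))).
  { intro; unfold E1, E2; simpl; rewrite !tv_mult; simpl; tauto. }
  set (a := I (Sk idx1) []).
  set (b := I (Sk idx2) []).
  assert (Ha : ~ (forall y, mulD m a = mulD m y -> a = y)).
  { assert (Ea : a = choose D d0 (fun d => ~ fe (dupd D (fun _ => d0) 0 d) (All 1 (Imp E1 E2)))).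
    { unfold a, idx1. rewrite fsubst_Var; [reflexivity|]. intros [|[|n]]; reflexivity. }
    assert (Ha0 : forall d, fe (dupd D (fun _ => d0) 0 d) (All 1 (Imp E1 E2)) <->
                    forall y, (mulD m d = mulD m y -> d = y)).
    { intro d. split; intros h y.
      - specialize (h y). rewrite Hev in h. exact h.
      - change (fe (dupd D (dupd D (fun _ => d0) 0 d) 1 y) (Imp E1 E2)).
        rewrite Hev. apply (h y). }
    rewrite <- Ha0, Ea. apply (choose_spec D d0 (fun d => ~ fe (dupd D (fun _ => d0) 0 d) (All 1 (Imp E1 E2)))).
    destruct Hab as [a0 [b0 [h1 h2]]]. exists a0. rewrite Ha0. intro h. apply h2. apply h. auto. }
  assert (Hb : mulD m a = mulD m b /\ a <> b).
  { set (sb := upd (upd Var 0 at1) 1 (Var 1)).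
    assert (Eb : b = choose D d0 (fun y => ~ fe (dupd D (fun _ => d0) 1 y) (fsubst sb (Imp E1 E2)))).
    { reflexivity. }
    assert (Hb0 : forall y, fe (dupd D (fun _ => d0) 1 y) (fsubst sb (Imp E1 E2)) <->
                    (mulD m a = mulD m y -> a = y)).
    { intro y. rewrite feval_subst by (simpl; auto). rewrite Hev. reflexivity. }
    assert (~ (mulD m a = mulD m b -> a = b)); [|tauto].
    rewrite <- Hb0, Eb. apply (choose_spec D d0 (fun y => ~ fe (dupd D (fun _ => d0) 1 y) (fsubst sb (Imp E1 E2)))).
    apply not_all_ex_not in Ha. destruct Ha as [y Hy]. exists y. rewrite Hb0. auto. }
  refine (cnf_sat D d0 base _ (sk_nnf _ _ _ _ _) _ c Hc); [simpl; tauto|].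
  intro rho. apply sk_sound; [simpl; tauto|]. rewrite Hev.
  change (~ (mulD m a = mulD m b -> a = b)). tauto.
Qed.

Lemma negD_sat m n : (exists a y, Nat.iter n (sD D base) (mulD m a) = mulD m y) ->
  forall c, In c (cnf_sk (Neg (D_ m n))) -> clause_sat I c.
Proof.
  intros Hab c Hc. unfold cnf_sk in Hc.
  set (K := Datatypes.S _) in Hc.
  set (E := Defs.neq (sN n (mult m vx)) (mult m vy)).
  set (idx1 := fsubst Var (All 0 (All 1 E))).
  set (at1 := App (Sk idx1) (map Var (fv idx1))).
  set (idx2 := fsubst (upd Var 0 at1) (All 1 E)).
  set (bt := App (Sk idx2) (map Var (fv idx2))).
  change (sk true Var K (Neg (D_ m n))) with (sk false (upd (upd Var 0 at1) 1 bt) K E) in Hc.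
  assert (Hev : forall rho', (fe rho' E <->
     ~ (Nat.iter n (sD D base) (mulD m (rho' 0)) = mulD m (rho' 1)))).
  { intro; unfold E; simpl; rewrite tv_sN, !tv_mult; simpl; tauto. }
  set (a := I (Sk idx1) []).
  set (b := I (Sk idx2) []).
  assert (Ha : ~ (forall y, ~ Nat.iter n (sD D base) (mulD m a) = mulD m y)).
  { assert (Ea : a = choose D d0 (fun d => ~ fe (dupd D (fun _ => d0) 0 d) (All 1 E))).
    { unfold a, idx1. rewrite fsubst_Var; [reflexivity|]. intros [|[|k]]; reflexivity. }
    assert (Ha0 : forall d, fe (dupd D (fun _ => d0) 0 d) (All 1 E) <->
                    forall y, ~ Nat.iter n (sD D base) (mulD m d) = mulD m y).
    { intro d. split; intros h y.
      - specialize (h y). rewrite Hev in h. exact h.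
      - change (fe (dupd D (dupd D (fun _ => d0) 0 d) 1 y) E).
        rewrite Hev. apply (h y). }
    rewrite <- Ha0, Ea. apply (choose_spec D d0 (fun d => ~ fe (dupd D (fun _ => d0) 0 d) (All 1 E))).
    destruct Hab as [a0 [b0 h1]]. exists a0. rewrite Ha0. intro h. apply (h b0). auto. }
  assert (Hb : Nat.iter n (sD D base) (mulD m a) = mulD m b).
  { set (sb := upd (upd Var 0 at1) 1 (Var 1)).
    assert (Eb : b = choose D d0 (fun y => ~ fe (dupd D (fun _ => d0) 1 y) (fsubst sb E))).
    { reflexivity. }
    assert (Hb0 : forall y, fe (dupd D (fun _ => d0) 1 y) (fsubst sb E) <->
                    ~ Nat.iter n (sD D base) (mulD m a) = mulD m y).
    { intro y. rewrite feval_subst by (simpl; auto). rewrite Hev. reflexivity. }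
    apply NNPP. rewrite <- Hb0, Eb. apply (choose_spec D d0 (fun y => ~ fe (dupd D (fun _ => d0) 1 y) (fsubst sb E))).
    apply not_all_ex_not in Ha. destruct Ha as [y Hy]. exists y. rewrite Hb0. auto. }
  refine (cnf_sat D d0 base _ (sk_nnf _ _ _ _ _) _ c Hc); [simpl; tauto|].
  intro rho. apply sk_sound; [simpl; tauto|]. rewrite Hev.
  change (~ ~ (Nat.iter n (sD D base) (mulD m a) = mulD m b)). tauto.
Qed.

Lemma main_generic m n :
  (forall A x rho, quantifier_free A ->
    fe (dupd D rho x (zD D base)) A -> (forall d, fe (dupd D rho x d) A -> fe (dupd D rho x (sD D base d)) A) ->
    forall d, fe (dupd D rho x d) A) ->
  (exists a b, mulD m a = mulD m b /\ a <> b) ->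
  (exists a y, Nat.iter n (sD D base) (mulD m a) = mulD m y) ->
  forall SS : sat_system, sound SS ->
  forall C, C = X_ m \/ C = Y_ m n -> ~ refutes (sys_union SS (IND (Open C))) C.
Proof.
  intros Hind HX HY SS Hs C HC. apply (no_refute D d0 base Hind); auto.
  intros c Hc. destruct HC as [->| ->]; unfold X_, Y_, cnf_sk_theory in Hc;
  apply in_flat_map in Hc; destruct Hc as [A [HA Hc]]; apply in_app_or in HA;
  (destruct HA as [HA|[<-|[]]]; [eapply T_sat; eauto|]).
  - eapply negC_sat; eauto.
  - eapply negD_sat; eauto.
Qed.
End Clauses.
Local Open Scope Z_scope.

Section ZModel.
Variable M : Z.
Hypothesis HM : 2 <= M.

Definition V := (Z * Z * Z)%type.
Definition wfP (v : V) : Prop := let '(u, j, t) := v in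
  (0 < j /\ 0 <= t < M) \/ (j = 0 /\ t = 0 /\ 0 <= u /\ u mod M = 0).
Definition wfb (v : V) : bool := let '(u, j, t) := v in
  ((0 <? j) && (0 <=? t) && (t <? M)) || ((j =? 0) && (t =? 0) && (0 <=? u) && (u mod M =? 0)).
Lemma wfb_iff v : wfb v = true <-> wfP v.
Proof.
  destruct v as [[u j] t]. simpl.
  rewrite Bool.orb_true_iff, !Bool.andb_true_iff, Z.ltb_lt, Z.leb_le, Z.ltb_lt, !Z.eqb_eq, Z.leb_le.
  tauto.
Qed.

Definition DD := {v : V | wfb v = true}.
Lemma wf0 : wfb (0,0,0) = true.
Proof. apply wfb_iff. simpl. right. rewrite Zmod_0_l. lia. Qed.
Definition zeroD : DD := exist _ (0,0,0) wf0.
Definition val (d : DD) : V := proj1_sig d.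
Definition mk (v : V) : DD :=
  match wfb v as b return wfb v = b -> DD with
  | true => fun h => exist _ v h
  | false => fun _ => zeroD
  end eq_refl.
Lemma val_mk v : wfP v -> val (mk v) = v.
Proof.
  intro h. apply wfb_iff in h. unfold mk.
  generalize (@eq_refl _ (wfb v)). pattern (wfb v) at 2 3. rewrite h. reflexivity.
Qed.
Lemma val_inj a b : val a = val b -> a = b.
Proof.
  destruct a as [a ha], b as [b hb]. simpl. intros ->. f_equal. apply UIP_dec. decide equality.
Qed.
Lemma val_wf d : wfP (val d).
Proof. destruct d as [v h]. simpl. apply wfb_iff; auto. Qed.

Definition du d := fst (fst (val d)).
Definition dj d := snd (fst (val d)).
Definition dt d := snd (val d).
Lemma val_eta d : val d = (du d, dj d, dt d).
Proof. unfold du, dj, dt. destruct (val d) as [[? ?] ?]; reflexivity. Qed.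
Lemma d_wf d : (0 < dj d /\ 0 <= dt d < M) \/ (dj d = 0 /\ dt d = 0 /\ 0 <= du d /\ du d mod M = 0).
Proof. pose proof (val_wf d) as h. rewrite val_eta in h. exact h. Qed.
Lemma d_eq a b : du a = du b -> dj a = dj b -> dt a = dt b -> a = b.
Proof. intros. apply val_inj. rewrite !val_eta. congruence. Qed.
Lemma dt_range d : 0 <= dt d < M.
Proof. destruct (d_wf d); lia. Qed.
Lemma mk_coords u j t : wfP (u,j,t) -> du (mk (u,j,t)) = u /\ dj (mk (u,j,t)) = j /\ dt (mk (u,j,t)) = t.
Proof. intro h. unfold du, dj, dt. rewrite val_mk; auto. Qed.

Definition sR (v : V) : V := let '(u,j,t) := v in (u + M, j, t).
Definition pR (v : V) : V := let '(u,j,t) := v in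
  if j =? 0 then (if u =? 0 then (0,0,0) else (u - M, 0, 0)) else (u - M, j, t).
Definition aR (v w : V) : V := let '(u,j,t) := v in let '(u',j',t') := w in
  (u + u', j + j', (t + t') mod M).

Lemma mod_sub_M u : u mod M = 0 -> (u - M) mod M = 0.
Proof.
  intro h. replace (u - M) with (u + (-1) * M) by ring. rewrite Z_mod_plus_full. auto.
Qed.
Lemma mod0_ge u : 0 <= u -> u mod M = 0 -> u <> 0 -> M <= u.
Proof.
  intros h1 h2 h3. pose proof (Z_div_mod_eq_full u M) as E. rewrite h2 in E.
  assert (0 < u / M). { destruct (Z.lt_trichotomy (u / M) 0) as [h|[h|h]]; try nia. }
  nia.
Qed.

Lemma wf_sR v : wfP v -> wfP (sR v).
Proof.
  destruct v as [[u j] t]; simpl. intros [h|h]; [left; lia|right].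
  split; [lia|]. split; [lia|]. split; [lia|].
  replace (u + M) with (u + 1 * M) by ring. rewrite Z_mod_plus_full. tauto.
Qed.
Lemma wf_pR v : wfP v -> wfP (pR v).
Proof.
  destruct v as [[u j] t]; simpl. intros [h|h].
  - destruct (j =? 0) eqn:E; [apply Z.eqb_eq in E; lia|]. simpl. left. lia.
  - destruct h as [-> [-> [h1 h2]]]. simpl. destruct (u =? 0) eqn:E; simpl.
    + right. rewrite Zmod_0_l. lia.
    + apply Z.eqb_neq in E. right. pose proof (mod0_ge u h1 h2 E).
      split; [lia|]. split; [lia|]. split; [lia|]. apply mod_sub_M; auto.
Qed.
Lemma wf_aR v w : wfP v -> wfP w -> wfP (aR v w).
Proof.
  destruct v as [[u j] t], w as [[u' j'] t']; simpl. intros h1 h2.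
  destruct h1 as [h1|h1]; destruct h2 as [h2|h2].
  - left. split; [lia|]. apply Z.mod_pos_bound. lia.
  - left. split; [lia|]. apply Z.mod_pos_bound. lia.
  - left. split; [lia|]. apply Z.mod_pos_bound. lia.
  - right. destruct h1 as [-> [-> [? ?]]], h2 as [-> [-> [? ?]]]. simpl.
    split; [lia|]. split; [apply Zmod_0_l|]. split; [lia|].
    rewrite Zplus_mod. rewrite H0, H2. reflexivity.
Qed.

Definition sDz (d : DD) : DD := mk (sR (val d)).
Definition pD (d : DD) : DD := mk (pR (val d)).
Definition aD (a b : DD) : DD := mk (aR (val a) (val b)).

Lemma sD_c d : du (sDz d) = du d + M /\ dj (sDz d) = dj d /\ dt (sDz d) = dt d.
Proof.
  unfold sDz. rewrite (val_eta d). simpl. apply mk_coords.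
  pose proof (wf_sR _ (val_wf d)) as h. rewrite val_eta in h. exact h.
Qed.
Lemma aD_c a b : du (aD a b) = du a + du b /\ dj (aD a b) = dj a + dj b /\
   dt (aD a b) = (dt a + dt b) mod M.
Proof.
  unfold aD. rewrite (val_eta a), (val_eta b). simpl. apply mk_coords.
  pose proof (wf_aR _ _ (val_wf a) (val_wf b)) as h. rewrite !val_eta in h. exact h.
Qed.
Lemma pD_c d : val (pD d) = pR (val d).
Proof. unfold pD. apply val_mk. apply wf_pR, val_wf. Qed.
Lemma zero_c : du zeroD = 0 /\ dj zeroD = 0 /\ dt zeroD = 0.
Proof. unfold du, dj, dt; simpl; auto. Qed.
Lemma pD_nz d : (du d <> 0 \/ dj d <> 0) ->
  du (pD d) = du d - M /\ dj (pD d) = dj d /\ dt (pD d) = dt d.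
Proof.
  intro h. unfold du, dj, dt. rewrite pD_c. fold (du d) (dj d) (dt d).
  pose proof (d_wf d) as w.
  rewrite val_eta. simpl. destruct (dj d =? 0) eqn:E.
  - apply Z.eqb_eq in E. destruct (du d =? 0) eqn:E2; [apply Z.eqb_eq in E2; lia|]. simpl. lia.
  - simpl. auto.
Qed.

Definition base (f : sym) (args : list DD) : DD :=
  match f, args with
  | SSucc, [a] => sDz a
  | SPred, [a] => pD a
  | SPlus, [a; b] => aD a b
  | _, _ => zeroD
  end.


Ltac coords := repeat match goal with
  | |- context [du (sDz ?d)] => destruct (sD_c d) as [? [? ?]]; fail 1
  end.

Lemma F1 d : zeroD <> sDz d.
Proof. intro h. pose proof (sD_c d). pose proof zero_c. pose proof (d_wf d). rewrite <- h in H. lia. Qed.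
Lemma F2 : pD zeroD = zeroD.
Proof. apply val_inj. rewrite pD_c. reflexivity. Qed.
Lemma F3 d : pD (sDz d) = d.
Proof.
  pose proof (sD_c d). pose proof (d_wf d).
  destruct (pD_nz (sDz d)) as [? [? ?]]; [lia|]. apply d_eq; lia.
Qed.
Lemma F4 d : aD d zeroD = d.
Proof.
  pose proof (aD_c d zeroD). pose proof zero_c. pose proof (dt_range d).
  apply d_eq; try lia. destruct H as [_ [_ ->]]. rewrite (proj2 (proj2 H0)), Z.add_0_r.
  apply Z.mod_small; auto.
Qed.
Lemma F5 d e : aD d (sDz e) = sDz (aD d e).
Proof.
  pose proof (aD_c d (sDz e)). pose proof (aD_c d e). pose proof (sD_c e). pose proof (sD_c (aD d e)).
  apply d_eq; try lia. destruct H as [_ [_ ->]]. destruct H2 as [_ [_ ->]]. destruct H1 as [_ [_ ->]].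
  destruct H0 as [_ [_ ->]]. reflexivity.
Qed.
Lemma F6 d : d <> zeroD -> d = sDz (pD d).
Proof.
  intro h. assert (du d <> 0 \/ dj d <> 0).
  { apply NNPP. intro h'. apply h. pose proof zero_c. pose proof (d_wf d). apply d_eq; lia. }
  pose proof (pD_nz d H). pose proof (sD_c (pD d)). apply d_eq; lia.
Qed.
Lemma F7 a b : aD a b = aD b a.
Proof.
  pose proof (aD_c a b). pose proof (aD_c b a). apply d_eq; try lia.
  destruct H as [_ [_ ->]]. destruct H0 as [_ [_ ->]]. rewrite Z.add_comm. reflexivity.
Qed.
Lemma F8 a b c : aD (aD a b) c = aD a (aD b c).
Proof.
  pose proof (aD_c (aD a b) c). pose proof (aD_c a (aD b c)). pose proof (aD_c a b). pose proof (aD_c b c).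
  apply d_eq; try lia.
  destruct H as [_ [_ ->]]. destruct H0 as [_ [_ ->]]. destruct H1 as [_ [_ ->]]. destruct H2 as [_ [_ ->]].
  rewrite Zplus_mod_idemp_l, Zplus_mod_idemp_r, Z.add_assoc. reflexivity.
Qed.
Lemma F9 a b c : aD a b = aD a c -> b = c.
Proof.
  intro h. pose proof (aD_c a b). pose proof (aD_c a c). rewrite h in H.
  pose proof (dt_range b). pose proof (dt_range c).
  apply d_eq; try lia.
  assert (E : (dt a + dt b) mod M = (dt a + dt c) mod M) by lia.
  rewrite <- (Z.mod_small (dt b) M), <- (Z.mod_small (dt c) M) by auto.
  replace (dt b) with ((dt a + dt b) - dt a) by ring.
  replace (dt c) with ((dt a + dt c) - dt a) by ring.
  rewrite <- (Zminus_mod_idemp_l (dt a + dt b)), <- (Zminus_mod_idemp_l (dt a + dt c)), E. reflexivity.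
Qed.

Notation fe := (feval' DD zeroD base).
Notation tv := (teval' DD zeroD base).

Lemma HT : forall A, In A theory_T' -> forall rho, fe rho A.
Proof.
  intros A HA rho. simpl in HA.
  repeat (destruct HA as [<-|HA]; [simpl|]); try destruct HA.
  all: unfold dupd; simpl; intros.
  - apply F1.
  - apply F2.
  - apply F3.
  - apply F4.
  - apply F5.
  - apply F6; auto.
  - apply F7.
  - apply F8.
  - eapply F9; eauto.
Qed.


Definition R (v : DD) (k e1 e2 e3 : Z) (d : DD) :=
  du v = k * du d + e1 /\ dj v = k * dj d + e2 /\ dt v mod M = (k * dt d + e3) mod M.
Definition small N d := Z.abs (du d) <= N /\ Z.abs (dj d) <= N.
Definition EV (P : DD -> Prop) := exists N, forall d, ~ small N d -> P d.

Lemma EV_mono (P Q : DD -> Prop) : (forall d, P d -> Q d) -> EV P -> EV Q.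
Proof. intros h [N hN]. exists N. auto. Qed.
Lemma EV_and (P Q : DD -> Prop) : EV P -> EV Q -> EV (fun d => P d /\ Q d).
Proof.
  intros [N1 h1] [N2 h2]. exists (Z.max N1 N2). intros d hd. split.
  - apply h1. intros [? ?]. apply hd. split; lia.
  - apply h2. intros [? ?]. apply hd. split; lia.
Qed.
Lemma EV_small (P : DD -> Prop) N : (forall d, ~ small N d -> P d) -> EV P.
Proof. intros; exists N; auto. Qed.

Definition LIN (F : DD -> DD) := exists k e1 e2 e3, 0 <= k /\ EV (fun d => R (F d) k e1 e2 e3 d).

Lemma lin_const (F : DD -> DD) c : (forall d, F d = c) -> LIN F.
Proof.
  intros h. exists 0, (du c), (dj c), (dt c). split; [lia|]. exists 0. intros d _.
  rewrite h. unfold R. split; [lia|]. split; [lia|]. f_equal; lia.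
Qed.

Lemma lin_succ F : LIN F -> LIN (fun d => sDz (F d)).
Proof.
  intros [k [e1 [e2 [e3 [hk HE]]]]]. exists k, (e1 + M), e2, e3. split; auto.
  revert HE. apply EV_mono. intros d [h1 [h2 h3]]. destruct (sD_c (F d)) as [? [? ?]].
  unfold R. split; [lia|]. split; [lia|]. congruence.
Qed.

Lemma lin_plus F G : LIN F -> LIN G -> LIN (fun d => aD (F d) (G d)).
Proof.
  intros [k [e1 [e2 [e3 [hk HE]]]]] [k' [e1' [e2' [e3' [hk' HE']]]]].
  exists (k + k'), (e1 + e1'), (e2 + e2'), (e3 + e3'). split; [lia|].
  generalize (EV_and _ _ HE HE'). apply EV_mono. intros d [[h1 [h2 h3]] [h1' [h2' h3']]].
  destruct (aD_c (F d) (G d)) as [? [? ?]].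
  unfold R. split; [lia|]. split; [lia|]. rewrite H1, Zmod_mod, Zplus_mod, h3, h3', <- Zplus_mod.
  f_equal. ring.
Qed.

Lemma abs_bound a u c : a <> 0 -> a * u = c -> Z.abs u <= Z.abs c.
Proof. intros h1 h2. subst. rewrite Z.abs_mul. nia. Qed.

Lemma lin_pred F : LIN F -> LIN (fun d => pD (F d)).
Proof.
  intros [k [e1 [e2 [e3 [hk HE]]]]].
  destruct (Z.eq_dec k 0) as [->|hk0].
  - exists 0.
    destruct (Z.eq_dec e2 0) as [->|h2].
    + destruct (Z.eq_dec e1 0) as [->|h1].
      * exists 0, 0, 0. split; [lia|]. revert HE. apply EV_mono. intros d [r1 [r2 r3]].
        pose proof (d_wf (F d)). assert (E : F d = zeroD).
        { pose proof zero_c. apply d_eq; lia. }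
        rewrite E, F2. pose proof zero_c. unfold R. split; [lia|]. split; [lia|].
        destruct H0 as [_ [_ ->]]. f_equal; lia.
      * exists (e1 - M), 0, 0. split; [lia|]. revert HE. apply EV_mono. intros d [r1 [r2 r3]].
        pose proof (d_wf (F d)).
        destruct (pD_nz (F d)) as [? [? ?]]; [lia|]. unfold R. split; [lia|]. split; [lia|].
        f_equal. lia.
    + exists (e1 - M), e2, e3. split; [lia|]. revert HE. apply EV_mono. intros d [r1 [r2 r3]].
      destruct (pD_nz (F d)) as [? [? ?]]; [lia|]. unfold R. split; [lia|]. split; [lia|].
      rewrite H1. auto.
  - exists k, (e1 - M), e2, e3. split; [lia|].
    destruct HE as [N HN]. exists (Z.max N (Z.abs e1 + Z.abs e2)). intros d hd.
    destruct (HN d) as [r1 [r2 r3]].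
    { intros [? ?]; apply hd; split; lia. }
    pose proof (d_wf (F d)).
    assert (du (F d) <> 0 \/ dj (F d) <> 0).
    { apply NNPP. intro hn. apply hd.
      assert (k * du d = - e1) by lia. assert (k * dj d = - e2) by lia.
      apply abs_bound in H0; auto. apply abs_bound in H1; auto. split; lia. }
    destruct (pD_nz (F d)) as [? [? ?]]; auto.
    unfold R. split; [lia|]. split; [lia|]. rewrite H3. auto.
Qed.

Lemma term_lin : forall t rho x, LIN (fun d => tv (dupd DD rho x d) t).
Proof.
  intros t rho x. induction t as [n|f args IH] using term_ind'.
  - simpl. unfold dupd. destruct (Nat.eqb n x).
    + exists 1, 0, 0, 0. split; [lia|]. exists 0. intros d _. unfold R.
      split; [lia|]. split; [lia|]. f_equal; lia.
    + apply (lin_const _ (rho n)). auto.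
  - destruct f; simpl.
    + apply (lin_const _ zeroD). auto.
    + destruct args as [|a [|b l]].
      * apply (lin_const _ zeroD). auto.
      * inversion IH; subst. apply lin_succ; auto.
      * apply (lin_const _ zeroD). auto.
    + destruct args as [|a [|b l]].
      * apply (lin_const _ zeroD). auto.
      * inversion IH; subst. apply lin_pred; auto.
      * apply (lin_const _ zeroD). auto.
    + destruct args as [|a [|b [|c l]]].
      * apply (lin_const _ zeroD). auto.
      * apply (lin_const _ zeroD). auto.
      * inversion IH; subst. inversion H2; subst. apply lin_plus; auto.
      * apply (lin_const _ zeroD). auto.
    + apply (lin_const _ (Isym DD zeroD base (Sk A) [])). intro; reflexivity.
Qed.

Definition Good (P : DD -> Prop) := EV P \/ EV (fun d => ~ P d).

Lemma good_eq F G : LIN F -> LIN G -> Good (fun d => F d = G d).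
Proof.
  intros [k [e1 [e2 [e3 [hk HE]]]]] [k' [e1' [e2' [e3' [hk' HE']]]]].
  destruct (Z.eq_dec k k') as [<-|hkk].
  - destruct (classic (e1 = e1' /\ e2 = e2' /\ e3 mod M = e3' mod M)) as [[<- [<- He]]|hn].
    + left. generalize (EV_and _ _ HE HE'). apply EV_mono. intros d [[r1 [r2 r3]] [r1' [r2' r3']]].
      pose proof (dt_range (F d)). pose proof (dt_range (G d)).
      apply d_eq; try lia.
      rewrite <- (Z.mod_small (dt (F d)) M), <- (Z.mod_small (dt (G d)) M) by auto.
      rewrite r3, r3', <- Zplus_mod_idemp_r, He, Zplus_mod_idemp_r. reflexivity.
    + right. generalize (EV_and _ _ HE HE'). apply EV_mono. intros d [[r1 [r2 r3]] [r1' [r2' r3']]] E.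
      apply hn. rewrite E in r1, r2, r3. split; [lia|]. split; [lia|].
      rewrite r3 in r3'.
      replace e3 with ((k * dt d + e3) - k * dt d) by ring.
      replace e3' with ((k * dt d + e3') - k * dt d) by ring.
      rewrite <- (Zminus_mod_idemp_l (k * dt d + e3)), <- (Zminus_mod_idemp_l (k * dt d + e3')), r3'.
      reflexivity.
  - right. destruct HE as [N HN], HE' as [N' HN'].
    exists (Z.abs N + Z.abs N' + Z.abs (e1' - e1) + Z.abs (e2' - e2)). intros d hd E.
    destruct (HN d) as [r1 [r2 r3]]; [intros [? ?]; apply hd; split; lia|].
    destruct (HN' d) as [r1' [r2' r3']]; [intros [? ?]; apply hd; split; lia|].
    rewrite E in r1, r2.
    assert ((k - k') * du d = e1' - e1) by lia. assert ((k - k') * dj d = e2' - e2) by lia.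
    apply abs_bound in H; [|lia]. apply abs_bound in H0; [|lia]. apply hd. split; lia.
Qed.

Lemma good_neg P : Good P -> Good (fun d => ~ P d).
Proof.
  intros [h|h]; [right|left]; auto. revert h. apply EV_mono. tauto.
Qed.
Lemma good_and P Q : Good P -> Good Q -> Good (fun d => P d /\ Q d).
Proof.
  intros [h|h] [h'|h'].
  - left. apply EV_and; auto.
  - right. revert h'. apply EV_mono. tauto.
  - right. revert h. apply EV_mono. tauto.
  - right. revert h. apply EV_mono. tauto.
Qed.
Lemma good_or P Q : Good P -> Good Q -> Good (fun d => P d \/ Q d).
Proof.
  intros [h|h] [h'|h'].
  - left. revert h. apply EV_mono. tauto.
  - left. revert h. apply EV_mono. tauto.
  - left. revert h'. apply EV_mono. tauto.
  - right. generalize (EV_and _ _ h h'). apply EV_mono. tauto.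
Qed.
Lemma good_imp P Q : Good P -> Good Q -> Good (fun d => P d -> Q d).
Proof.
  intros [h|h] [h'|h'].
  - left. revert h'. apply EV_mono. tauto.
  - right. generalize (EV_and _ _ h h'). apply EV_mono. tauto.
  - left. revert h'. apply EV_mono. tauto.
  - left. revert h. apply EV_mono. tauto.
Qed.

Lemma good_form : forall A rho x, quantifier_free A -> Good (fun d => fe (dupd DD rho x d) A).
Proof.
  induction A; intros rho x0 Hq; simpl in Hq; try contradiction.
  - apply good_eq; apply term_lin.
  - apply (good_neg (fun d => fe (dupd DD rho x0 d) A)). auto.
  - apply (good_and (fun d => fe (dupd DD rho x0 d) A1) (fun d => fe (dupd DD rho x0 d) A2)); [apply IHA1|apply IHA2]; tauto.
  - apply (good_or (fun d => fe (dupd DD rho x0 d) A1) (fun d => fe (dupd DD rho x0 d) A2)); [apply IHA1|apply IHA2]; tauto.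
  - apply (good_imp (fun d => fe (dupd DD rho x0 d) A1) (fun d => fe (dupd DD rho x0 d) A2)); [apply IHA1|apply IHA2]; tauto.
Qed.

Definition stdD (k : nat) : DD := mk (Z.of_nat k * M, 0, 0).
Lemma std_wf k : wfP (Z.of_nat k * M, 0, 0).
Proof. simpl. right. split; [lia|]. split; [lia|]. split; [lia|]. apply Z_mod_mult. Qed.

Lemma ind_good (Q : DD -> Prop) : Good Q -> Q zeroD -> (forall d, Q d -> Q (sDz d)) -> forall d, Q d.
Proof.
  intros HG H0 HS.
  assert (Hstd : forall k, Q (stdD k)).
  { induction k.
    - replace (stdD 0) with zeroD; auto. destruct (mk_coords _ _ _ (std_wf 0)) as [? [? ?]].
      pose proof zero_c. unfold stdD in *. apply d_eq; lia.
    - replace (stdD (Datatypes.S k)) with (sDz (stdD k)); auto.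
      destruct (mk_coords _ _ _ (std_wf k)) as [? [? ?]].
      destruct (mk_coords _ _ _ (std_wf (Datatypes.S k))) as [? [? ?]].
      destruct (sD_c (stdD k)) as [? [? ?]]. unfold stdD in *. apply d_eq; lia. }
  destruct HG as [[N HN]|[N HN]].
  - intro d. destruct (d_wf d) as [[hj ht]|[hj [ht [hu hm]]]].
    + apply NNPP. intro hq.
      set (ek := fun k : nat => mk (du d - Z.of_nat k * M, dj d, dt d)).
      assert (Hwk : forall k, wfP (du d - Z.of_nat k * M, dj d, dt d)).
      { intro k. simpl. left. lia. }
      assert (Hek : forall k, ~ Q (ek k)).
      { induction k.
        - replace (ek 0%nat) with d; auto. destruct (mk_coords _ _ _ (Hwk 0%nat)) as [? [? ?]].
          apply d_eq; unfold ek; lia.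
        - intro h. apply IHk. replace (ek k) with (sDz (ek (Datatypes.S k))); auto.
          destruct (mk_coords _ _ _ (Hwk k)) as [? [? ?]].
          destruct (mk_coords _ _ _ (Hwk (Datatypes.S k))) as [? [? ?]].
          destruct (sD_c (ek (Datatypes.S k))) as [? [? ?]]. unfold ek in *. apply d_eq; lia. }
      set (k := (Z.to_nat (Z.abs (du d) + Z.abs N) + 1)%nat).
      apply (Hek k). apply HN. intros [h1 h2].
      destruct (mk_coords _ _ _ (Hwk k)) as [? [? ?]]. unfold ek in h1. rewrite H in h1.
      assert (Z.of_nat k = Z.abs (du d) + Z.abs N + 1) by (unfold k; lia). nia.
    + pose proof (Z_div_mod_eq_full (du d) M) as E. rewrite hm in E.
      assert (0 <= du d / M) by (apply Z.div_pos; lia).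
      replace d with (stdD (Z.to_nat (du d / M))); auto.
      destruct (mk_coords _ _ _ (std_wf (Z.to_nat (du d / M)))) as [? [? ?]].
      unfold stdD in *. apply d_eq; try lia.
  - exfalso. set (k := (Z.to_nat (Z.abs N) + 1)%nat). apply (HN (stdD k)); auto.
    intros [h1 h2]. destruct (mk_coords _ _ _ (std_wf k)) as [? [? ?]]. unfold stdD in h1.
    rewrite H in h1. assert (Z.of_nat k = Z.abs N + 1) by (unfold k; lia). nia.
Qed.

Lemma Hind : forall A x rho, quantifier_free A ->
    fe (dupd DD rho x (zD DD base)) A ->
    (forall d, fe (dupd DD rho x d) A -> fe (dupd DD rho x (sD DD base d)) A) ->
    forall d, fe (dupd DD rho x d) A.
Proof.
  intros A x rho Hq H0 HS. apply (ind_good (fun d => fe (dupd DD rho x d) A)); auto.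
  apply good_form; auto.
Qed.
End ZModel.
Close Scope Z_scope.

Lemma mulD_c (M : Z) (HM : (2 <= M)%Z) : forall k d, (1 <= k)%nat ->
  du M (mulD (DD M) (base M) k d) = (Z.of_nat k * du M d)%Z /\
  dj M (mulD (DD M) (base M) k d) = (Z.of_nat k * dj M d)%Z /\
  dt M (mulD (DD M) (base M) k d) = ((Z.of_nat k * dt M d) mod M)%Z.
Proof.
  induction k as [|k IH]; intros d hk; [lia|].
  destruct k as [|k].
  - change (mulD (DD M) (base M) 1 d) with d. pose proof (dt_range M HM d).
    change (Z.of_nat 1) with 1%Z. rewrite !Z.mul_1_l. rewrite Z.mod_small by lia. auto.
  - destruct (IH d) as [h1 [h2 h3]]; [lia|].
    change (mulD (DD M) (base M) (Datatypes.S (Datatypes.S k)) d) with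
      (aD M d (mulD (DD M) (base M) (Datatypes.S k) d)).
    destruct (aD_c M HM d (mulD (DD M) (base M) (Datatypes.S k) d)) as [a1 [a2 a3]].
    rewrite a1, a2, a3, h1, h2, h3. split; [lia|]. split; [lia|].
    rewrite Zplus_mod_idemp_r. f_equal. lia.
Qed.

Lemma iter_c (M : Z) (HM : (2 <= M)%Z) : forall k d,
  du M (Nat.iter k (sD (DD M) (base M)) d) = (du M d + Z.of_nat k * M)%Z /\
  dj M (Nat.iter k (sD (DD M) (base M)) d) = dj M d /\
  dt M (Nat.iter k (sD (DD M) (base M)) d) = dt M d.
Proof.
  induction k as [|k IH]; intros d; [simpl; split; [lia|auto]|].
  destruct (IH d) as [h1 [h2 h3]].
  change (Nat.iter (Datatypes.S k) (sD (DD M) (base M)) d) with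
    (sDz M (Nat.iter k (sD (DD M) (base M)) d)).
  destruct (sD_c M HM (Nat.iter k (sD (DD M) (base M)) d)) as [a1 [a2 a3]].
  rewrite a1, a2, a3, h1, h2, h3. split; [lia|auto].
Qed.

Theorem theorem4 :
  forall (m n : nat), 0 < n -> n < m ->
  forall (S : sat_system), sound S ->
  forall (C : clause_set), C = X_ m \/ C = Y_ m n ->
    ~ refutes (sys_union S (IND (Open C))) C.
Proof.
  intros m n Hn Hm SS Hs C HC.
  set (M := Z.of_nat m).
  assert (HM : (2 <= M)%Z) by (unfold M; lia).
  apply (main_generic (DD M) (zeroD M) (base M) (HT M HM) m n (Hind M HM)); auto.
  - assert (w1 : wfP M (0, 1, 0)%Z) by (simpl; left; lia).
    assert (w2 : wfP M (0, 1, 1)%Z) by (simpl; left; lia).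
    exists (mk M (0,1,0)%Z), (mk M (0,1,1)%Z).
    destruct (mk_coords M _ _ _ w1) as [a1 [a2 a3]].
    destruct (mk_coords M _ _ _ w2) as [b1 [b2 b3]].
    destruct (mulD_c M HM m (mk M (0,1,0)%Z)) as [c1 [c2 c3]]; [lia|].
    destruct (mulD_c M HM m (mk M (0,1,1)%Z)) as [e1 [e2 e3]]; [lia|].
    split.
    + apply d_eq; [rewrite c1, e1, a1, b1; lia|rewrite c2, e2, a2, b2; lia|].
      rewrite c3, e3, a3, b3. rewrite Z.mul_0_r, Z.mul_1_r. fold M. rewrite Z_mod_same_full, Zmod_0_l. auto.
    + intro E. rewrite E in a3. lia.
  - assert (w1 : wfP M (0, 1, 0)%Z) by (simpl; left; lia).
    assert (w2 : wfP M (Z.of_nat n, 1, 0)%Z) by (simpl; left; lia).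
    exists (mk M (0,1,0)%Z), (mk M (Z.of_nat n,1,0)%Z).
    destruct (mk_coords M _ _ _ w1) as [a1 [a2 a3]].
    destruct (mk_coords M _ _ _ w2) as [b1 [b2 b3]].
    destruct (mulD_c M HM m (mk M (0,1,0)%Z)) as [c1 [c2 c3]]; [lia|].
    destruct (mulD_c M HM m (mk M (Z.of_nat n,1,0)%Z)) as [e1 [e2 e3]]; [lia|].
    destruct (iter_c M HM n (mulD (DD M) (base M) m (mk M (0,1,0)%Z))) as [i1 [i2 i3]].
    apply d_eq.
    + rewrite i1, c1, e1, a1, b1. unfold M. lia.
    + rewrite i2, c2, e2, a2, b2. lia.
    + rewrite i3, c3, e3, a3, b3. reflexivity.
Qed.
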